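(* Let $R$ be a commutative ring. The flat topology and the Zariski topology on $\mathrm{Spec}(R)$ coincide if and only if every prime ideal of $R$ is maximal.
   Context: The flat topology on $\mathrm{Spec}(R)$ is the topology having as a basis of open sets the sets $V(I)=\{\mathfrak p\in\mathrm{Spec}(R):I\subseteq\mathfrak p\}$ with $I$ ranging over finitely generated ideals of $R$ (Hochster's inverse topology). *)

(* Defs.v *)
From HB Require Import structures.
From mathcomp Require Import all_boot all_order all_algebra.
Set Implicit Arguments. Unset Strict Implicit. Unset Printing Implicit Defensive.
Import GRing.Theory.
Local Open Scope ring_scope.

Definition is_ideal (R : comPzRingType) (I : R -> Prop) : Prop :=
  [/\ I 0, (forall x y, I x -> I y -> I (x + y))
    & (forall r x, I x -> I (r * x))].

Definition prime_ideal (R : comPzRingType) (P : R -> Prop) : Prop :=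
  [/\ is_ideal P, ~ P 1 & (forall x y, P (x * y) -> P x \/ P y)].

Definition maximal_ideal (R : comPzRingType) (M : R -> Prop) : Prop :=
  [/\ is_ideal M, ~ M 1 &
     (forall J : R -> Prop, is_ideal J -> (forall x, M x -> J x) ->
        (forall x, J x <-> M x) \/ J 1)].

Definition ideal_gen (R : comPzRingType) (s : seq R) : R -> Prop :=
  fun x => exists c : seq R, x = \sum_(i < size s) c`_i * s`_i.

Definition fg_ideal (R : comPzRingType) (I : R -> Prop) : Prop :=
  exists s : seq R, forall x, I x <-> ideal_gen s x.

Definition Spec (R : comPzRingType) := {p : R -> Prop | prime_ideal p}.

Definition V (R : comPzRingType) (S : R -> Prop) : Spec R -> Prop :=
  fun p => forall x, S x -> proj1_sig p x.

Definition zariski_open (R : comPzRingType) (U : Spec R -> Prop) : Prop :=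
  exists S : R -> Prop, forall p, U p <-> ~ V S p.

Definition flat_open (R : comPzRingType) (U : Spec R -> Prop) : Prop :=
  forall p, U p -> exists I : R -> Prop,
    [/\ is_ideal I, fg_ideal I, V I p & forall q, V I q -> U q].

(* Main.v *)
Require Import Defs.
From mathcomp Require Import all_boot all_order all_algebra.
From mathcomp Require Import ring.
From mathcomp Require Import boolp classical_sets.
From Stdlib Require Import Classical.
Import GRing.Theory.
Local Open Scope ring_scope.

Lemma ideal_mulr (R : comPzRingType) (I : R -> Prop) x r : is_ideal I -> I x -> I (x * r).
Proof. by case=> _ _ HM Ix; rewrite mulrC; apply: HM. Qed.

Lemma exists_prime (R : comPzRingType) (J M : R -> Prop) :
  is_ideal J -> M 1 -> (forall a b, M a -> M b -> M (a * b)) ->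
  (forall x, J x -> ~ M x) ->
  exists Q, [/\ prime_ideal Q, (forall x, J x -> Q x) & (forall x, Q x -> ~ M x)].
Proof.
move=> HJ M1 MM JM.
pose P (A : set R) := (forall x, ~ A x) \/
  [/\ is_ideal A, (forall x, J x -> A x) & (forall x, A x -> ~ M x)].
have [A [PA Amax]] : exists A : set R, P A /\ (forall B, (A `<` B)%classic -> ~ P B).
  apply: Zorn_bigcup => F FP Ftot.
  case: (classic (exists X, F X /\ X 0)) => [[X0 [FX0 X00]]|Hno]; last first.
    left => x [X FX Xx]; case: (FP X FX) => [HX|[[HX0 _ _] _ _]].
      exact: HX Xx.
    by apply: Hno; exists X.
  have HX0 : [/\ is_ideal X0, (forall x, J x -> X0 x) & (forall x, X0 x -> ~ M x)].
    by case: (FP X0 FX0) => // H; case: (H 0).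
  right; split.
  - split.
    + by exists X0.
    + move=> x y [X FX Xx] [Y FY Yy].
      have HI Z : F Z -> Z x \/ Z y -> is_ideal Z.
        by move=> FZ Zxy; case: (FP Z FZ) => [H|[]//]; case: Zxy => /H.
      case: (Ftot X Y FX FY) => [XY|YX].
      * exists Y => //; case: (HI Y FY (or_intror Yy)) => _ Hadd _.
        by apply: Hadd => //; apply: XY.
      * exists X => //; case: (HI X FX (or_introl Xx)) => _ Hadd _.
        by apply: Hadd => //; apply: YX.
    + move=> r x [X FX Xx]; exists X => //.
      by case: (FP X FX) => [H|[[_ _ Hm] _ _]]; [case: (H x)|apply: Hm].
  - by move=> x Jx; exists X0 => //; case: HX0 => _ H _; apply: H.
  - by move=> x [X FX Xx]; case: (FP X FX) => [H|[_ _ H]]; [case: (H x Xx)|apply: H].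
case: PA => [HA|[HAi JA AM]].
  exfalso; apply: (Amax J); last by right; split => // x Jx /JM.
  split; first by move=> x /HA.
  by case: HJ => J0 _ _ H; apply: (HA 0); apply: H.
have Amax' : forall B, is_ideal B -> (forall x, A x -> B x) -> (forall x, J x -> B x) ->
    (forall x, B x -> ~ M x) -> forall x, B x -> A x.
  move=> B HB AB JB BM x Bx; apply: NNPP => nAx.
  apply: (Amax B); last by right.
  by split => // H; apply: nAx; apply: H.
exists A; split => //; split => //.
  by move=> /AM; apply.
move=> x y Axy; apply: NNPP => /not_or_and [nAx nAy].
case: HAi => A0 Aadd Amul.
pose B z (t : R) := exists a r, A a /\ t = a + r * z.
have HB z : is_ideal (B z).
  split.
  - by exists 0, 0; split => //; rewrite mul0r addr0.
  - move=> s t [a [r [Aa ->]]] [b [r' [Ab ->]]]; exists (a + b), (r + r'); split.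
      exact: Aadd.
    by rewrite mulrDl !addrA; congr (_ + _); rewrite -!addrA; congr (_ + _); rewrite addrC.
  - move=> r' s [a [r [Aa ->]]]; exists (r' * a), (r' * r); split; first exact: Amul.
    by rewrite mulrDr mulrA.
have AB z : forall t, A t -> B z t by move=> t At; exists t, 0; rewrite mul0r addr0.
have Bz z : B z z by exists 0, 1; rewrite mul1r add0r.
have meet z : ~ A z -> exists a r, A a /\ M (a + r * z).
  move=> nAz; apply: NNPP => Hn; apply: nAz.
  apply: (Amax' (B z) (HB z) (AB z)); last exact: Bz.
  - by move=> t Jt; apply: AB; apply: JA.
  - by move=> t [a [r [Aa ->]]] Mt; apply: Hn; exists a, r.
have [a [r [Aa Ma]]] := meet x nAx.
have [b [r' [Ab Mb]]] := meet y nAy.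
apply: (AM _ _ (MM _ _ Ma Mb)).
have -> : (a + r * x) * (b + r' * y) = a * (b + r' * y) + r * (x * b) + (r * r') * (x * y) by ring.
apply Aadd; [apply Aadd|].
- by rewrite mulrC; apply Amul.
- by apply Amul; apply Amul.
- by apply Amul.
Qed.
Lemma ideal_gen_ideal (R : comPzRingType) (s : seq R) : is_ideal (ideal_gen s).
Proof.
split.
- exists [::]; rewrite big1 // => i _; by rewrite nth_nil mul0r.
- move=> x y [c ->] [d ->]; exists (mkseq (fun i => c`_i + d`_i) (size s)).
  rewrite -big_split /=; apply: eq_bigr => i _.
  by rewrite nth_mkseq // mulrDl.
- move=> r x [c ->]; exists (mkseq (fun i => r * c`_i) (size s)).
  rewrite mulr_sumr; apply: eq_bigr => i _.
  by rewrite nth_mkseq // mulrA.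
Qed.

Lemma ideal_gen_sub (R : comPzRingType) (s : seq R) (Q : R -> Prop) x :
  is_ideal Q -> (forall k, (k < size s)%N -> Q s`_k) -> ideal_gen s x -> Q x.
Proof.
move=> [Q0 Qadd Qmul] Hs [c ->].
apply: (big_ind Q) => // i _; apply: Qmul; exact: Hs.
Qed.

Lemma ideal_gen_mem (R : comPzRingType) (s : seq R) k :
  (k < size s)%N -> ideal_gen s s`_k.
Proof.
move=> hk; exists (mkseq (fun i => (i == k)%:R) (size s)).
rewrite (bigD1 (Ordinal hk)) //= nth_mkseq // eqxx mul1r big1 ?addr0 //.
move=> i /eqP ik; rewrite nth_mkseq //.
have -> : (nat_of_ord i == k) = false.
  by apply/negbTE/eqP => ek; apply: ik; apply: val_inj.
by rewrite mul0r.
Qed.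

Lemma prime_pow (R : comPzRingType) (Q : R -> Prop) a n :
  prime_ideal Q -> Q (a ^+ n) -> Q a.
Proof.
move=> [HQ Q1 Qp]; elim: n => [|n IH]; first by rewrite expr0 => /Q1.
by rewrite exprS => /Qp [].
Qed.

Lemma minimal_nil (R : comPzRingType) (q : R -> Prop) a :
  (forall P : R -> Prop, prime_ideal P -> maximal_ideal P) ->
  prime_ideal q -> q a -> exists t n, ~ q t /\ t * a ^+ n = 0.
Proof.
move=> Hmax Hq qa; apply: NNPP => Hn.
have Hq' := Hq; case: Hq' => Hqi q1 qp.
pose M z := exists t n, ~ q t /\ z = t * a ^+ n.
have [Q [HQ _ QM]] : exists Q, [/\ prime_ideal Q, (forall x, x = 0 -> Q x) & (forall x, Q x -> ~ M x)].
  apply: exists_prime.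
  - split => //; first by move=> x y -> ->; rewrite addr0.
    by move=> r x ->; rewrite mulr0.
  - by exists 1, 0%N; rewrite expr0 mulr1.
  - move=> _ _ [t [n [qt ->]]] [t' [n' [qt' ->]]]; exists (t * t'), (n + n')%N; split.
      by move=> /qp [].
    by rewrite exprD; ring.
  - move=> x -> [t [n [qt e]]]; apply: Hn; exists t, n; split => //.
have Qq : forall x, Q x -> q x.
  move=> x Qx; apply: NNPP => nqx; apply: (QM x Qx); exists x, 0%N.
  by rewrite expr0 mulr1.
have [_ _ Qm] := Hmax Q HQ.
case: (Qm q Hqi Qq) => [H|//].
apply: (QM a); first by apply/H.
by exists 1, 1%N; rewrite expr1 mul1r.
Qed.

Theorem corollary4p8 (R : comPzRingType) :
  (forall U : Spec R -> Prop, zariski_open U <-> flat_open U) <->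
  (forall P : R -> Prop, prime_ideal P -> maximal_ideal P).
Proof.
split.
- move=> H P HP; have HP' := HP; case: HP' => HPi P1 Pm; split => //.
  move=> J HJ PJ; case: (classic (J 1)) => [J1|nJ1]; first by right.
  left; apply: NNPP => /not_all_ex_not [x Hx].
  have [Jx nPx] : J x /\ ~ P x.
    have := PJ x; have := classic (J x); tauto.
  pose U (q : Spec R) := ~ proj1_sig q x.
  have : flat_open U.
    apply/H; exists (fun y => y = x) => q; split.
      by move=> nqx Hv; apply: nqx; apply: Hv.
    by move=> Hv qx; apply: Hv => y ->.
  move=> /(_ (exist _ P HP) nPx) [I [HI _ VI IU]].
  pose K z := exists i r, I i /\ z = i + r * x.
  have HK : is_ideal K.
    case: HI => I0 Iadd Imul; split.
    - by exists 0, 0; split => //; rewrite mul0r addr0.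
    - move=> s t [a [r [Aa ->]]] [b [r' [Ab ->]]]; exists (a + b), (r + r'); split.
        exact: Iadd.
      by ring.
    - move=> r' s [a [r [Aa ->]]]; exists (r' * a), (r' * r); split; first exact: Imul.
      by ring.
  have KJ : forall z, K z -> J z.
    case: HJ => _ Jadd Jmul.
    move=> z [i [r [Ii ->]]]; apply: Jadd; first by apply: PJ; apply: VI.
    by apply: Jmul.
  have [Q [HQ KQ _]] : exists Q, [/\ prime_ideal Q, (forall z, K z -> Q z) & (forall z, Q z -> ~ (fun w => w = 1) z)].
    apply: exists_prime => //.
    - by move=> ? ? -> ->; rewrite mulr1.
    - by move=> z Kz e; apply: nJ1; rewrite -e; apply: KJ.
  apply: (IU (exist _ Q HQ)).
  + by move=> i Ii; apply: KQ; exists i, 0; rewrite mul0r addr0.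
  + apply: KQ; exists 0, 1; split; last by rewrite mul1r add0r.
    by case: HI.
- move=> Hmax U; split.
  + move=> [S HS] p Up.
    have [s [Ss nps]] : exists s, S s /\ ~ proj1_sig p s.
      move/HS: Up => Hv; apply: NNPP => Hn; apply: Hv => y Sy.
      apply: NNPP => npy; apply: Hn; exists y; split => //.
    case: p Up nps => p Hp Up /= nps.
    have [Hpi p1 pm] := Hmax p Hp.
    pose J z := exists a r, p a /\ z = a + r * s.
    have HJ : is_ideal J.
      case: Hpi => I0 Iadd Imul; split.
      - by exists 0, 0; split => //; rewrite mul0r addr0.
      - move=> x y [a [r [Aa ->]]] [b [r' [Ab ->]]]; exists (a + b), (r + r'); split.
          exact: Iadd.
        by ring.
      - move=> r' x [a [r [Aa ->]]]; exists (r' * a), (r' * r); split; first exact: Imul.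
        by ring.
    case: (pm J HJ).
    * by move=> x px; exists x, 0; rewrite mul0r addr0.
    * by move=> Hj; exfalso; apply: nps; apply/Hj; exists 0, 1; rewrite mul1r add0r; split => //; case: Hpi.
    move=> [a [r [pa e1]]].
    exists (ideal_gen [:: a]); split.
    * exact: ideal_gen_ideal.
    * by exists [:: a].
    * move=> x Hx; apply: (@ideal_gen_sub _ [:: a] p) Hx => // k; case: k => //.
    * move=> q Vq; apply/HS => Vs.
      have qa : proj1_sig q a by apply: Vq; exact: (@ideal_gen_mem _ [:: a] 0%N).
      have qs : proj1_sig q s by apply: Vs.
      case: q Vq Vs qa qs => q [[_ qadd qmul] q1 _] /= _ _ qa qs.
      by apply: q1; rewrite e1; apply: qadd => //; apply: qmul.
  + move=> HU.
    exists (fun s => forall q : Spec R, ~ proj1_sig q s -> U q) => q; split; last first.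
      move=> Hv; apply: NNPP => nU; apply: Hv => s Hs.
      by apply: NNPP => nqs; apply: nU; apply: Hs.
    move=> Uq; have [I [HI [g Hg] VI IU]] := HU q Uq.
    have gq : forall k, (k < size g)%N -> proj1_sig q g`_k.
      by move=> k hk; apply: VI; apply/Hg; apply: ideal_gen_mem.
    have key : forall n, (n <= size g)%N -> exists s, ~ proj1_sig q s /\
        forall q' : Spec R, ~ proj1_sig q' s -> forall k, (k < n)%N -> proj1_sig q' g`_k.
      elim => [|n IH] hn.
        exists 1; split => [|q' _ k //].
        by case: (proj2_sig q).
      have [s [nqs Hs]] := IH (ltnW hn).
      have [t [m [nqt tm]]] := @minimal_nil _ _ _ Hmax (proj2_sig q) (gq n hn).
      exists (s * t); split.
        by case: (proj2_sig q) => _ _ qp /qp [].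
      move=> q' nq' k; rewrite ltnS leq_eqVlt => /orP [/eqP ->|kn].
        case: (proj2_sig q') => [[q'0 _ _] _ qp].
        have : proj1_sig q' (t * g`_n ^+ m) by rewrite tm.
        move=> /qp [qt|]; first by exfalso; apply: nq'; case: (proj2_sig q') => [[_ _ qm] _ _]; apply: qm.
        exact: prime_pow (proj2_sig q').
      apply: Hs => // qs; apply: nq'.
      by case: (proj2_sig q') => [[_ _ qm] _ _]; rewrite mulrC; apply: qm.
    have [s [nqs Hs]] := key _ (leqnn _).
    move=> Vs; apply: nqs; apply: Vs => q' nq's.
    apply: IU => x /Hg; apply: ideal_gen_sub; first by case: (proj2_sig q').
    by move=> k hk; apply: Hs.
Qed.
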